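(* Let $X$ be a normed space with norm $\|\cdot\|$ and let $Y_\rho$ be a $\rho$-complete modular space associated with a convex modular $\rho$ satisfying the $\Delta_2$-condition with constant $\tau$ (i.e. $\rho(2u)\le\tau\rho(u)$ for all $u\in Y_\rho$). Let $\theta>0$ and $r>\log_2\!\left(\frac{\tau^3}{2}\right)$ be real numbers, and let $\phi: X\to Y_\rho$ be a mapping such that $$\rho\big(\phi(x+y-z)+\phi(x+z-y)+\phi(y+z-x)-\phi(x-y)-\phi(x-z)-\phi(z-y)-\phi(x)-\phi(y)-\phi(z)\big)\le\theta\left(\|x\|^r+\|y\|^r+\|z\|^r\right)$$ for all $x,y,z\in X$. Then there exists a unique quadratic mapping $h: X\to Y_\rho$ such that $$\rho(\phi(x)-h(x))\le\frac{3\theta\tau^2}{2\left(2^{r+1}-\tau^3\right)}\|x\|^r\quad\text{for all }x\in X.$$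
   Context: A convex modular on a vector space $Y$ is a functional $\rho: Y\to[0,\infty)$ such that for all $u,v\in Y$: (i) $\rho(u)=0$ iff $u=0$; (ii) $\rho(\lambda u)=\rho(u)$ for every scalar $\lambda$ with $|\lambda|=1$; (iii) $\rho(a u+b v)\le a\rho(u)+b\rho(v)$ whenever $a,b\ge 0$ and $a+b=1$. The associated modular space is $Y_\rho=\{u\in Y: \rho(\lambda u)\to 0 \text{ as } \lambda\to 0\}$. $\rho$ satisfies the $\Delta_2$-condition if there is $\tau>0$ with $\rho(2u)\le\tau\rho(u)$ for all $u\in Y_\rho$. A sequence $\{u_n\}$ in $Y_\rho$ is $\rho$-convergent to $u$ if $\rho(u_n-u)\to 0$; it is $\rho$-Cauchy if $\rho(u_n-u_m)\to0$ as $n,m\to\infty$; $Y_\rho$ is $\rho$-complete if every $\rho$-Cauchy sequence is $\rho$-convergent. A mapping $h: X\to Y_\rho$ is quadratic if $h(x+y)+h(x-y)=2h(x)+2h(y)$ for all $x,y\in X$. *)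

(* Defs.v *)
From HB Require Import structures.
From mathcomp Require Import all_boot all_order all_algebra.
From mathcomp Require Import all_classical all_reals all_analysis.
Set Implicit Arguments. Unset Strict Implicit. Unset Printing Implicit Defensive.
Import Order.TTheory GRing.Theory Num.Theory.
Import numFieldNormedType.Exports.
Local Open Scope classical_set_scope.
Local Open Scope ring_scope.

Definition convex_modular (R : realType) (Y : lmodType R) (rho : Y -> R) : Prop :=
  [/\ forall u, 0 <= rho u,
      forall u, rho u = 0 <-> u = 0,
      forall (l : R) u, `|l| = 1 -> rho (l *: u) = rho u &
      forall (a b : R) u v, 0 <= a -> 0 <= b -> a + b = 1 ->
        rho (a *: u + b *: v) <= a * rho u + b * rho v].

Definition modular_space (R : realType) (Y : lmodType R) (rho : Y -> R) : set Y :=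
  [set u | rho (l *: u) @[l --> (0 : R)] --> (0 : R)].

Definition delta2 (R : realType) (Y : lmodType R) (rho : Y -> R) (tau : R) : Prop :=
  0 < tau /\ forall u, modular_space rho u -> rho (2 *: u) <= tau * rho u.

Definition rho_cauchy (R : realType) (Y : lmodType R) (rho : Y -> R) (s : nat -> Y) : Prop :=
  forall e : R, 0 < e -> exists N : nat, forall n m : nat, (N <= n)%N -> (N <= m)%N ->
    rho (s n - s m) < e.

Definition rho_converges (R : realType) (Y : lmodType R) (rho : Y -> R) (s : nat -> Y) (u : Y) : Prop :=
  rho (s n - u) @[n --> \oo] --> (0 : R).

Definition rho_complete (R : realType) (Y : lmodType R) (rho : Y -> R) : Prop :=
  forall s : nat -> Y, (forall n, modular_space rho (s n)) -> rho_cauchy rho s ->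
    exists2 u, modular_space rho u & rho_converges rho s u.

Definition quadratic (R : realType) (X : lmodType R) (Y : lmodType R) (h : X -> Y) : Prop :=
  forall x y, h (x + y) + h (x - y) = 2 *: h x + 2 *: h y.

(* Main.v *)
Require Import Defs.
From HB Require Import structures.
From mathcomp Require Import all_boot all_order all_algebra.
From mathcomp Require Import all_classical all_reals all_analysis.
From mathcomp Require Import ring lra.
Import Order.TTheory GRing.Theory Num.Theory.
Import numFieldNormedType.Exports.
Local Open Scope classical_set_scope.
Local Open Scope ring_scope.
Set Implicit Arguments. Unset Strict Implicit. Unset Printing Implicit Defensive.
Section S.
Context (R : realType) (Y : lmodType R) (rho : Y -> R) (cm : convex_modular rho).

Lemma rho_ge0 u : 0 <= rho u. Proof. by case: cm. Qed.
Lemma rho0 : rho 0 = 0. Proof. by case: cm => _ H _ _; apply H. Qed.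
Lemma rho_eq0 u : rho u = 0 -> u = 0. Proof. by case: cm => _ H _ _; apply H. Qed.
Lemma rhoN u : rho (- u) = rho u.
Proof. case: cm => _ _ H _; rewrite -scaleN1r H // normrN normr1 //. Qed.
Lemma rho_conv a b u v : 0 <= a -> 0 <= b -> a + b = 1 ->
  rho (a *: u + b *: v) <= a * rho u + b * rho v.
Proof. by case: cm => _ _ _ H; apply: H. Qed.
Lemma rho_half u v : rho (u + v) <= (rho (2 *: u) + rho (2 *: v)) / 2.
Proof.
have h2 : (2:R)^-1 + 2^-1 = 1 by rewrite -div1r -splitr.
have h0 : (0:R) <= 2^-1 by rewrite invr_ge0.
have := @rho_conv (2^-1) (2^-1) (2 *: u) (2 *: v) h0 h0 h2.
rewrite !scalerA mulVf ?pnatr_eq0 // !scale1r => /le_trans; apply.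
by rewrite mulrDl !(mulrC (2^-1)) le_refl.
Qed.
Lemma rho_sc s u : 0 <= s <= 1 -> rho (s *: u) <= s * rho u.
Proof.
case/andP=> s0 s1; have := @rho_conv s (1 - s) u 0.
rewrite scaler0 addr0 rho0 mulr0 addr0; apply => //.
  by rewrite subr_ge0. by rewrite addrC subrK.
Qed.
End S.
Section M.
Context (R : realType) (Y : lmodType R) (rho : Y -> R) (cm : convex_modular rho).
Local Notation ms := (modular_space rho).

Lemma lim_lc (c : R) : (fun l : R => l * c) @ (nbhs (0:R)) --> (0:R).
Proof. have := @cvgMr_tmp R R (nbhs (0:R)) _ id 0 c cvg_id. rewrite mul0r. exact. Qed.

Lemma ms0 : ms 0.
Proof. rewrite /modular_space /=. under eq_fun do rewrite scaler0 (rho0 cm). exact: cvg_cst. Qed.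

Lemma msZ c u : ms u -> ms (c *: u).
Proof.
rewrite /modular_space /= => H.
under eq_fun do rewrite scalerA.
exact: (cvg_comp _ _ (lim_lc c) H).
Qed.

Lemma msN u : ms u -> ms (- u).
Proof. by move=> H; rewrite -scaleN1r; apply: msZ. Qed.

Lemma msD u v : ms u -> ms v -> ms (u + v).
Proof.
rewrite /modular_space /= => Hu Hv.
have Hu2 := cvg_comp _ _ (lim_lc 2) Hu.
have Hv2 := cvg_comp _ _ (lim_lc 2) Hv.
have H := cvgMr_tmp (b := 2^-1) (cvgD Hu2 Hv2); move: H => /(_ _ _) H.
rewrite addr0 mul0r in H.
have Hn : \forall l \near (0:R), (fun=> 0) l <= rho (l *: (u + v)) <=
    ((rho \o [eta *:%R^~ u] \o (fun l => l * 2)) + (rho \o [eta *:%R^~ v] \o (fun l => l * 2))) l * 2^-1.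
  near=> l => /=; rewrite rho_ge0 //=.
  rewrite scalerDr /=; apply: le_trans (rho_half cm _ _) _.
  by rewrite !scalerA !(mulrC 2).
exact: (squeeze_cvgr Hn (cvg_cst (0:R)) H).
Unshelve. all: by end_near.
Qed.
End M.
Lemma Z9 (R : realType) (V : lmodType R) (a : V) :
  a + a + a - a - a - a - a - a - a = 0 -> a = 0.
Proof.
rewrite !addrK subrr sub0r -!opprD => /eqP.
rewrite oppr_eq0 -mulr2n -mulrSr -scaler_nat scaler_eq0 pnatr_eq0 /=.
by move/eqP.
Qed.

Lemma ZA (R : realType) (V : lmodType R) (a b c : V) :
  a - 4 *: b = (a - b - c - b - b) + (b + b + c - b - b - b).
Proof.
rewrite (addrAC b b c) addrK (addrC b c) addrK.
rewrite -!addrA; congr (_ + _).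
rewrite [-c + _]addrCA [-c + _]addrCA addKr -!opprD; congr (- _).
by rewrite scaler_nat !mulrS mulr0n addr0.
Qed.

Lemma ZE1 (R : realType) (V : lmodType R) (a c : V) :
  a + a + c - a - a - a = 0 -> c = a.
Proof.
rewrite (addrAC a a c) addrK (addrC a c) addrK => /eqP; rewrite subr_eq0.
by move/eqP.
Qed.

Lemma ZE2 (R : realType) (V : lmodType R) (a b c e : V) :
  a + b + b - b - c - e - c - e = 0 -> a + b = 2 *: c + 2 *: e.
Proof.
rewrite addrK => /eqP; rewrite !subr_eq add0r => /eqP ->.
rewrite !scaler_nat !mulr2n.
by rewrite -addrA addrACA addrC.
Qed.
Definition Eop (R : realType) (X : normedModType R) (Y : lmodType R) (f : X -> Y) (x y z : X) :=
  f (x + y - z) + f (x + z - y) + f (y + z - x) - f (x - y) - f (x - z) - f (z - y)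
  - f x - f y - f z.

Lemma eqle (R : realType) (x y : R) : x = y -> x <= y. Proof. by move->. Qed.

Section Main.
Context (R : realType) (X : normedModType R) (Y : lmodType R) (rho : Y -> R)
  (tau theta r : R) (phi : X -> Y).
Local Notation ms := (modular_space rho).
Hypothesis cm : convex_modular rho.
Hypothesis D2 : delta2 rho tau.
Hypothesis th0 : 0 < theta.
Hypothesis hP : tau ^+ 3 / 2 < 2 `^ r.
Hypothesis t2 : 2 <= tau.
Hypothesis Hphi : forall x, ms (phi x).
Let N (x : X) := `|x| `^ r.
Hypothesis HE : forall x y z, rho (Eop phi x y z) <= theta * (N x + N y + N z).

Let half : R := 2^-1.
Let Ph := half `^ r.
Let P := 2 `^ r.

Lemma tau_gt0 : 0 < tau. Proof. by case: D2. Qed.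

Lemma r_neq0 : r != 0.
Proof.
apply/negP => /eqP r0; move: hP; rewrite /P r0 powRr0.
have t8 : 8 <= tau ^+ 3.
  have -> : (8 : R) = 2 ^+ 3 by rewrite -natrX.
  by rewrite lerXn2r // ?nnegrE // (le_trans _ t2).
rewrite ltr_pdivrMr // mul1r => /(le_lt_trans t8); by rewrite ltr_nat.
Qed.

Lemma PPh : P * Ph = 1.
Proof. by rewrite /P /Ph -powRM ?invr_ge0 // mulfV ?pnatr_eq0 // powR1. Qed.

Lemma Ph_gt0 : 0 < Ph. Proof. by rewrite /Ph powR_gt0 // invr_gt0. Qed.
Lemma P_gt0 : 0 < P. Proof. by rewrite /P powR_gt0. Qed.

Lemma N0 : N 0 = 0. Proof. by rewrite /N normr0 powR0 // r_neq0. Qed.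
Lemma N_ge0 x : 0 <= N x. Proof. exact: powR_ge0. Qed.
Lemma Nh x : N (half *: x) = Ph * N x.
Proof. rewrite /N normrZ ger0_norm ?invr_ge0 // powRM ?invr_ge0 //. Qed.
Lemma Nhn n x : N (half ^+ n *: x) = Ph ^+ n * N x.
Proof.
elim: n => [|n IH]; first by rewrite expr0 scale1r mul1r.
by rewrite !exprS -scalerA Nh IH mulrA.
Qed.

Lemma d2 u : ms u -> rho (2 *: u) <= tau * rho u.
Proof. by case: D2 => _; apply. Qed.

Lemma d4 u : ms u -> rho (4 *: u) <= tau ^+ 2 * rho u.
Proof.
move=> mu; have -> : (4:R) *: u = 2 *: (2 *: u) by rewrite scalerA -natrM.
apply: le_trans (d2 (msZ _ mu)) _.
rewrite expr2 -mulrA ler_wpM2l ?(ltW tau_gt0) //; exact: d2.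
Qed.

Lemma d8 u : ms u -> rho (8 *: u) <= tau ^+ 3 * rho u.
Proof.
move=> mu; have -> : (8:R) *: u = 2 *: (4 *: u) by rewrite scalerA -natrM.
apply: le_trans (d2 (msZ _ mu)) _.
rewrite exprS -mulrA ler_wpM2l ?(ltW tau_gt0) //; exact: d4.
Qed.

Lemma d4n n u : ms u -> rho ((4:R) ^+ n *: u) <= (tau ^+ 2) ^+ n * rho u.
Proof.
move=> mu; elim: n => [|n IH]; first by rewrite !expr0 scale1r mul1r.
rewrite exprS -scalerA; apply: le_trans (d4 (msZ _ mu)) _.
by rewrite (exprS (tau ^+ 2)) -mulrA ler_wpM2l // sqr_ge0.
Qed.

Lemma sum2 u v : ms u -> ms v -> rho (u + v) <= tau / 2 * rho u + tau / 2 * rho v.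
Proof.
move=> mu mv; apply: le_trans (rho_half cm _ _) _.
rewrite ler_pdivrMr //; apply: le_trans (lerD (d2 mu) (d2 mv)) _.
by apply: eqle; field.
Qed.

Lemma phi0 : phi 0 = 0.
Proof.
have := HE 0 0 0; rewrite N0 !addr0 mulr0 => H.
have /(rho_eq0 cm) : rho (Eop phi 0 0 0) = 0 by apply/le_anti; rewrite H rho_ge0.
by rewrite /Eop !subr0 !addr0; apply: Z9.
Qed.

Ltac msolve := repeat (first [apply: (msD cm) | apply: (msN) | apply: (msZ) | apply: Hphi]).

Lemma wbound z : rho (phi (z + z) - 4 *: phi z) <= 3 * tau / 2 * theta * N z.
Proof.
have hA := HE z z 0.
rewrite /Eop !subr0 !addr0 !subrr sub0r phi0 !subr0 !addr0 N0 addr0 in hA.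
have hD := HE z 0 0.
rewrite /Eop !subr0 !addr0 sub0r phi0 ?subr0 ?addr0 N0 ?addr0 in hD.
rewrite (ZA _ (phi z) (phi (- z))).
apply: le_trans (sum2 _ _) _; [msolve|msolve|].
have t0 : 0 <= tau / 2 by rewrite divr_ge0 // ltW // tau_gt0.
apply: le_trans (lerD (ler_wpM2l t0 hA) (ler_wpM2l t0 hD)) _.
by apply: eqle; field.
Qed.

Definition T n x := (4:R) ^+ n *: phi (half ^+ n *: x).

Lemma msT n x : ms (T n x). Proof. by apply: msZ; apply: Hphi. Qed.

Lemma TD j n x : T (j + n) x = (4:R) ^+ n *: T j (half ^+ n *: x).
Proof. by rewrite /T !exprD !scalerA (mulrC (4 ^+ n)). Qed.

Lemma T0 x : T 0 x = phi x. Proof. by rewrite /T !expr0 !scale1r. Qed.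

Lemma T1 n x : T n.+1 x = 4 *: T n (half *: x).
Proof. by rewrite -addn1 TD !expr1. Qed.

Lemma hh (x : X) : half *: x + half *: x = x.
Proof. by rewrite -scalerDl /half -div1r -splitr scale1r. Qed.

Let M := 3 * theta * tau ^+ 2 / (2 * (2 * P - tau ^+ 3)).

Lemma den_gt0 : 0 < 2 * P - tau ^+ 3.
Proof. rewrite subr_gt0 -ltr_pdivrMl //; move: hP; rewrite mulrC //. Qed.

Lemma M_ge0 : 0 <= M.
Proof.
rewrite /M divr_ge0 // ?mulr_ge0 ?ltW ?den_gt0 // ?exprn_ge0 ?ltW ?tau_gt0 //.
Qed.

Lemma Mkey : tau / 2 * (3 * tau / 2 * theta * Ph) + tau ^+ 3 / 2 * (M * Ph) = M.
Proof.
have hPh : Ph = P^-1 by apply: (mulfI (lt0r_neq0 P_gt0)); rewrite PPh mulfV // lt0r_neq0 // P_gt0.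
have h1 := den_gt0; have h2 := P_gt0.
rewrite hPh /M; field.
by rewrite !lt0r_neq0.
Qed.

Lemma sum48 u s : ms u -> ms s -> rho (u + 4 *: s) <= tau / 2 * rho u + tau ^+ 3 / 2 * rho s.
Proof.
move=> mu ms_; apply: le_trans (rho_half cm _ _) _.
rewrite scalerA -natrM ler_pdivrMr //.
apply: le_trans (lerD (d2 mu) (d8 ms_)) _.
by apply: eqle; field.
Qed.

Lemma contract x (s : Y) K : ms s -> rho s <= K * N (half *: x) ->
  rho ((phi x - 4 *: phi (half *: x)) + 4 *: s)
    <= (tau / 2 * (3 * tau / 2 * theta * Ph) + tau ^+ 3 / 2 * (K * Ph)) * N x.
Proof.
move=> ms_ hs; apply: le_trans (sum48 _ ms_) _; first by msolve.
have hw := wbound (half *: x); rewrite hh Nh in hw.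
rewrite Nh in hs.
have t0 : 0 <= tau / 2 by rewrite divr_ge0 // ltW // tau_gt0.
have t3 : 0 <= tau ^+ 3 / 2 by rewrite divr_ge0 // exprn_ge0 // ltW // tau_gt0.
apply: le_trans (lerD (ler_wpM2l t0 hw) (ler_wpM2l t3 hs)) _.
by apply: eqle; ring.
Qed.

Lemma Sbound n x : rho (phi x - T n x) <= M * N x.
Proof.
elim: n x => [|n IH] x.
  by rewrite T0 subrr rho0 // mulr_ge0 // ?M_ge0 // N_ge0.
rewrite T1.
have -> : phi x - 4 *: T n (half *: x) =
    (phi x - 4 *: phi (half *: x)) + 4 *: (phi (half *: x) - T n (half *: x)).
  by rewrite scalerBr addrA subrK.
apply: le_trans (contract _ (IH _)) _; first by msolve; apply: msT.
by rewrite Mkey.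
Qed.

Let q := tau ^+ 2 * Ph.

Lemma q_ge0 : 0 <= q. Proof. by rewrite mulr_ge0 ?sqr_ge0 // ltW // Ph_gt0. Qed.

Lemma q_lt1 : q < 1.
Proof.
rewrite -PPh /q ltr_pM2r ?Ph_gt0 //.
apply: le_lt_trans hP.
rewrite ler_pdivlMr // exprS mulrC ler_wpM2r // ?sqr_ge0 //.
Qed.

Lemma Tdiff n j x : rho (T n x - T (j + n) x) <= (M * N x) * q ^+ n.
Proof.
rewrite TD; have -> : T n x = 4 ^+ n *: phi (half ^+ n *: x) by []. rewrite -scalerBr.
apply: le_trans (d4n _ _) _; first by msolve; apply: msT.
have h := Sbound j (half ^+ n *: x); rewrite Nhn in h.
apply: le_trans (ler_wpM2l _ h) _; first by rewrite exprn_ge0 // sqr_ge0.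
by apply: eqle; rewrite /q [(_ * Ph) ^+ n]exprMn; ring.
Qed.

Lemma Tcauchy x : rho_cauchy rho (fun n => T n x).
Proof.
move=> e e0.
have hq : `|q| < 1 by rewrite ger0_norm ?q_ge0 // q_lt1.
have [N1 _ HN] := (cvgrPdist_lt _ _).1 (cvg_geometric (M * N x) hq) e e0.
exists N1 => n m hn hm /=.
have key k : (N1 <= k)%N -> (M * N x) * q ^+ k < e.
  move=> hk; have := HN k hk; rewrite /= sub0r normrN ger0_norm //.
  by apply: mulr_ge0; [apply: mulr_ge0; [apply: M_ge0|apply: N_ge0] | apply: exprn_ge0; apply: q_ge0].
case: (leqP n m) => hnm.
  rewrite -(subnK hnm); apply: le_lt_trans (Tdiff _ _ _) _; exact: key.
rewrite -rhoN // opprB -(subnK (ltnW hnm)).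
apply: le_lt_trans (Tdiff _ _ _) _; exact: key.
Qed.

Lemma lim_le (a c : R) (f : nat -> R) : (forall n, a <= c + f n) -> f n @[n --> \oo] --> 0 -> a <= c.
Proof.
move=> H hf; rewrite leNgt; apply/negP => ca.
have e0 : 0 < a - c by rewrite subr_gt0.
have [N1 _ HN] := (cvgrPdist_lt _ _).1 hf _ e0.
have := HN N1 (leqnn N1); rewrite /= sub0r normrN => h1.
have := H N1; rewrite -lerBlDl => h2.
have := le_lt_trans h2 (le_lt_trans (ler_norm _) h1); by rewrite ltxx.
Qed.

Lemma cvgk (k : R) (g : nat -> R) : g n @[n --> \oo] --> 0 -> k * g n @[n --> \oo] --> 0.
Proof. by move=> h; rewrite -(mulr0 k); apply: cvgMl_tmp. Qed.

Lemma squeeze0 (g f : nat -> R) : (forall n, 0 <= g n <= f n) -> f n @[n --> \oo] --> 0 ->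
  g n @[n --> \oo] --> 0.
Proof.
move=> H hf.
have Hn : \forall n \near \oo, (fun=> (0:R)) n <= g n <= f n by near=> n; apply: H.
exact: (squeeze_cvgr Hn (cvg_cst (0:R)) hf).
Unshelve. all: by end_near.
Qed.

Lemma LimD (s t : nat -> Y) u v : (forall n, ms (s n)) -> (forall n, ms (t n)) -> ms u -> ms v ->
  rho_converges rho s u -> rho_converges rho t v ->
  rho_converges rho (fun n => s n + t n) (u + v).
Proof.
move=> ms_ mt mu mv hs ht.
apply: (@squeeze0 _ (fun n => tau / 2 * rho (s n - u) + tau / 2 * rho (t n - v))).
  move=> n; rewrite rho_ge0 //= opprD addrACA; apply: sum2; by msolve.
have := cvgD (cvgk (tau / 2) hs) (cvgk (tau / 2) ht); rewrite addr0; exact.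
Qed.

Lemma LimN (s : nat -> Y) u : rho_converges rho s u -> rho_converges rho (fun n => - s n) (- u).
Proof.
rewrite /rho_converges => h.
under eq_fun do rewrite -opprD rhoN //.
exact: h.
Qed.

Lemma Lim_unique (s : nat -> Y) u v : (forall n, ms (s n)) -> ms u -> ms v ->
  rho_converges rho s u -> rho_converges rho s v -> u = v.
Proof.
move=> ms_ mu mv hu hv; apply/eqP; rewrite -subr_eq0; apply/eqP/(rho_eq0 cm)/le_anti.
rewrite rho_ge0 // andbT.
apply: (@lim_le _ 0 (fun n => tau / 2 * rho (s n - u) + tau / 2 * rho (s n - v))).
  move=> n; rewrite add0r.
  have -> : u - v = - (s n - u) + (s n - v) by rewrite opprB addrA subrK.
  apply: le_trans (sum2 _ _) _; try by msolve.
  by rewrite rhoN.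
have := cvgD (cvgk (tau / 2) hu) (cvgk (tau / 2) hv); rewrite addr0; exact.
Qed.

Lemma quad0 (g : X -> Y) : quadratic g -> g 0 = 0.
Proof.
move=> Hg; have := Hg 0 0; rewrite addr0 subr0 !scaler_nat !mulr2n.
rewrite -{1}(addr0 (g 0 + g 0)) => /addrI /esym /eqP.
by rewrite -mulr2n -scaler_nat scaler_eq0 pnatr_eq0 /= => /eqP.
Qed.

Lemma quad2 (g : X -> Y) : quadratic g -> forall z, g (z + z) = 4 *: g z.
Proof.
move=> Hg z; have := Hg z z; rewrite subrr quad0 // addr0 => ->.
by rewrite -scalerDl -natrD.
Qed.

Lemma quad4 (g : X -> Y) : quadratic g -> forall x, g x = 4 *: g (half *: x).
Proof. by move=> Hg x; rewrite -quad2 // hh. Qed.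

Lemma quad4n (g : X -> Y) : quadratic g -> forall n x, g x = (4:R) ^+ n *: g (half ^+ n *: x).
Proof.
move=> Hg; elim=> [|n IH] x; first by rewrite !expr0 !scale1r.
by rewrite IH (quad4 Hg (half ^+ n *: x)) !scalerA -exprSr -exprS.
Qed.

Lemma ET n x y z : Eop (T n) x y z =
  (4:R) ^+ n *: Eop phi (half ^+ n *: x) (half ^+ n *: y) (half ^+ n *: z).
Proof. by rewrite /Eop /T !scalerDr !scalerN. Qed.

Lemma ET0 x y z : rho_converges rho (fun n => Eop (T n) x y z) 0.
Proof.
rewrite /rho_converges.
have hq : `|q| < 1 by rewrite ger0_norm ?q_ge0 // q_lt1.
apply: (squeeze0 _ (cvg_geometric (theta * (N x + N y + N z)) hq)).
move=> n; rewrite subr0 rho_ge0 //= ET.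
apply: le_trans (d4n _ _) _; first by rewrite /Eop; msolve.
apply: le_trans (ler_wpM2l _ (HE _ _ _)) _; first by rewrite exprn_ge0 // sqr_ge0.
by apply: eqle; rewrite !Nhn /q [(_ * Ph) ^+ n]exprMn; ring.
Qed.

Section H.
Variable h : X -> Y.
Hypothesis Hh : forall x, ms (h x) /\ rho_converges rho (fun n => T n x) (h x).

Lemma Eh x y z : Eop h x y z = 0.
Proof.
have mh x' : ms (h x') by case: (Hh x').
have mTn n x' : ms (T n x') by apply: msT.
apply: (@Lim_unique (fun n => Eop (T n) x y z)); first by move=> n; rewrite /Eop; msolve.
- by rewrite /Eop; msolve.
- exact: ms0.
- rewrite /Eop.
  repeat (first [ apply: LimD | apply: LimN | apply: (proj2 (Hh _)) | move=> n | apply: mh | apply: mTn | msolve]).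
exact: ET0.
Qed.

Lemma h0 : h 0 = 0.
Proof. have := Eh 0 0 0; rewrite /Eop !subr0 !addr0; exact: Z9. Qed.

Lemma heven x : h (- x) = h x.
Proof.
have := Eh x 0 0; rewrite /Eop !subr0 !addr0 sub0r h0 ?subr0 ?addr0; exact: ZE1.
Qed.

Lemma hquad : quadratic h.
Proof.
move=> x y; have := Eh x y 0.
rewrite /Eop !subr0 !addr0 sub0r h0 ?subr0 ?addr0 heven -[y - x]opprB heven.
exact: ZE2.
Qed.

Lemma hms x : ms (h x). Proof. by case: (Hh x). Qed.

Ltac ms2 := repeat (first [apply: (msD cm) | apply: msN | apply: msT | apply: hms | apply: Hphi | apply: msZ]).

Lemma crude x : rho (phi x - h x) <= tau / 2 * M * N x.
Proof.
apply: (@lim_le _ _ (fun n => tau / 2 * rho (T n x - h x))); last first.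
  by apply: cvgk; rewrite /rho_converges; case: (Hh x).
move=> n.
have -> : phi x - h x = (phi x - T n x) + (T n x - h x) by rewrite addrA subrK.
apply: le_trans (sum2 _ _) _; [by ms2 | by ms2 |].
rewrite lerD2r -(mulrA (tau / 2)) ler_wpM2l ?Sbound //.
by rewrite divr_ge0 // ltW // tau_gt0.
Qed.

Let b := tau ^+ 3 / 2 * Ph.

Lemma b_ge0 : 0 <= b.
Proof. by rewrite /b mulr_ge0 ?divr_ge0 ?exprn_ge0 // ltW // ?tau_gt0 // Ph_gt0. Qed.

Lemma b_lt1 : b < 1.
Proof. rewrite /b -[X in _ < X]PPh ltr_pM2r ?Ph_gt0 //. Qed.

Lemma refine K : (forall x, rho (phi x - h x) <= K * N x) ->
  forall x, rho (phi x - h x) <= (M + b * (K - M)) * N x.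
Proof.
move=> HK x; rewrite (quad4 hquad x).
have -> : phi x - 4 *: h (half *: x) =
    (phi x - 4 *: phi (half *: x)) + 4 *: (phi (half *: x) - h (half *: x)).
  by rewrite scalerBr addrA subrK.
apply: le_trans (contract _ (HK _)) _; first by ms2.
apply: eqle; congr (_ * _).
by rewrite -{1}Mkey /b; field.
Qed.

Lemma iterk k x : rho (phi x - h x) <= (M + b ^+ k * (tau / 2 * M - M)) * N x.
Proof.
elim: k x => [|k IH] x.
  have -> : M + b ^+ 0 * (tau / 2 * M - M) = tau / 2 * M by rewrite expr0; field.
  exact: crude.
apply: le_trans (refine IH x) _; apply: eqle; congr (_ * _).
by rewrite exprS; field.
Qed.

Lemma hbound x : rho (phi x - h x) <= M * N x.
Proof.
have hb : `|b| < 1 by rewrite ger0_norm ?b_ge0 // b_lt1.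
apply: (lim_le _ (cvg_geometric ((tau / 2 * M - M) * N x) hb)).
move=> k; apply: le_trans (iterk k x) _; apply: eqle; rewrite /geometric /=.
by set bk := b ^+ k; field.
Qed.

Lemma huniq h' : (forall x, ms (h' x)) -> quadratic h' ->
  (forall x, rho (phi x - h' x) <= M * N x) -> h = h'.
Proof.
move=> m' q' b'; apply: funext => x.
apply/eqP; rewrite -subr_eq0; apply/eqP/(rho_eq0 cm)/le_anti.
rewrite rho_ge0 // andbT.
have hq : `|q| < 1 by rewrite ger0_norm ?q_ge0 // q_lt1.
apply: (lim_le _ (cvg_geometric (tau * M * N x) hq)) => n.
rewrite add0r (quad4n hquad n x) (quad4n q' n x) -scalerBr.
apply: le_trans (d4n _ _) _; first by ms2; apply: m'.
set y := half ^+ n *: x.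
have -> : h y - h' y = - (phi y - h y) + (phi y - h' y) by rewrite opprB addrA subrK.
apply: le_trans (ler_wpM2l _ (sum2 _ _)) _; [by rewrite exprn_ge0 // sqr_ge0 | by ms2 | by ms2; apply: m' |].
rewrite rhoN //.
have t0 : 0 <= tau / 2 by rewrite divr_ge0 // ltW // tau_gt0.
apply: le_trans (ler_wpM2l _ (lerD (ler_wpM2l t0 (hbound y)) (ler_wpM2l t0 (b' y)))) _.
  by rewrite exprn_ge0 // sqr_ge0.
by apply: eqle; rewrite /y Nhn /geometric /q [(_ * Ph) ^+ n]exprMn; field.
Qed.
End H.
End Main.

Lemma trivial_ms (R : realType) (Y : lmodType R) (rho : Y -> R) tau :
  convex_modular rho -> delta2 rho tau -> tau < 2 -> forall u, modular_space rho u -> u = 0.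
Proof.
move=> cm [t0 D2] t2 u mu; apply: (rho_eq0 cm); apply/le_anti; rewrite rho_ge0 // andbT.
rewrite leNgt; apply/negP => ru.
have h1 : rho u <= 2^-1 * rho (2 *: u).
  have := @rho_sc _ _ _ cm (2^-1) (2 *: u); rewrite scalerA mulVf ?pnatr_eq0 // scale1r; apply.
  by apply/andP; split; [rewrite invr_ge0 | rewrite invf_le1 // ler1n].
have h2 := D2 u mu.
have : rho u < rho u.
  apply: (le_lt_trans h1); rewrite -(mul1r (rho u)) -[in X in _ < X](mulVf (x := 2)) ?pnatr_eq0 //.
  rewrite -mulrA ltr_pM2l ?invr_gt0 //; apply: (le_lt_trans h2); rewrite ltr_pM2r //.
by rewrite ltxx.
Qed.

Theorem corollary3p2 (R : realType) (X : normedModType R) (Y : lmodType R)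
    (rho : Y -> R) (tau theta r : R) (phi : X -> Y) :
  convex_modular rho -> rho_complete rho -> delta2 rho tau ->
  0 < theta -> ln (tau ^+ 3 / 2) / ln 2 < r ->
  (forall x, modular_space rho (phi x)) ->
  (forall x y z : X,
      rho (phi (x + y - z) + phi (x + z - y) + phi (y + z - x)
           - phi (x - y) - phi (x - z) - phi (z - y)
           - phi x - phi y - phi z)
      <= theta * (`|x| `^ r + `|y| `^ r + `|z| `^ r)) ->
  exists! h : X -> Y,
    [/\ forall x, modular_space rho (h x),
        quadratic h &
        forall x, rho (phi x - h x)
          <= 3 * theta * tau ^+ 2 / (2 * (2 `^ (r + 1) - tau ^+ 3)) * `|x| `^ r].
Proof.
move=> cm comp D2 th0 hr Hphi HE.
have tg0 : 0 < tau by case: D2.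
have hP : tau ^+ 3 / 2 < 2 `^ r.
  have l2 : 0 < ln (2 : R) by rewrite ln_gt0 // ltr1n.
  rewrite ltr_pdivrMr // -ln_powR in hr.
  by rewrite -ltr_ln // posrE ?powR_gt0 // divr_gt0 // exprn_gt0.
have -> : 2 `^ (r + 1) = 2 * 2 `^ r :> R.
  rewrite powRD; last by apply/implyP => _; rewrite ?pnatr_eq0.
  by rewrite [_ `^ 1]powRr1 // mulrC.
case: (ltP tau 2) => t2.
  have z := trivial_ms cm D2 t2.
  exists (fun=> 0); split.
    split => [x|x y|x]; first exact: ms0.
      by rewrite !scaler0 addr0.
    rewrite (z _ (Hphi x)) subrr rho0 // mulr_ge0 ?powR_ge0 //.
    rewrite divr_ge0 ?mulr_ge0 ?exprn_ge0 ?ltW // ?mulr_gt0 // subr_gt0 -ltr_pdivrMl //.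
    by rewrite mulrC.
  move=> h' [m' _ _]; apply: funext => x; exact/esym/z.
have ex x : exists u, modular_space rho u /\ rho_converges rho (fun n => T phi n x) u.
  have [u mu cu] := comp _ (fun n => msT Hphi n x) (Tcauchy cm D2 th0 hP t2 Hphi HE x).
  by exists u.
have [h Hh] := choice ex.
exists h; split.
  split.
  - exact: hms Hh.
  - apply: (hquad cm D2 hP t2 Hphi _ Hh); exact: HE.
  - apply: (hbound cm D2 th0 hP t2 Hphi _ Hh); exact: HE.
move=> h' [m' q' b']; apply: (huniq cm D2 th0 hP t2 Hphi _ Hh m' q' b'); exact: HE.
Qed.
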